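(* Let $n,d\ge1$. Let $W=(w_{i,j})$, $\widetilde W=(\tilde w_{i,j})$ be real $n\times n$ matrices and $G,\widetilde G$ real $nd\times nd$ block matrices with $d\times d$ blocks $G_{i,j},\widetilde G_{i,j}$. Suppose there exist $f_1,\dots,f_n>0$ and $\varepsilon,\eta\ge0$ with $$\sup_{i,j}\Big|\frac{\tilde w_{i,j}}{f_i}-w_{i,j}\Big|\le\varepsilon,\qquad \sup_{i,j}\|\widetilde G_{i,j}-G_{i,j}\|_F\le\eta,$$ and that there is $C>0$ with $0\le w_{i,j}\le C$ for all $i,j$, $\sup_{i,j}\|G_{i,j}\|_F\le C$ and $\sup_{i,j}\|\widetilde G_{i,j}\|_F\le C$. If $\inf_i\frac1n\sum_{j\ne i}w_{i,j}>\gamma$ and $\gamma>\varepsilon$, then $$\|L(W,G)-L(\widetilde W,\widetilde G)\|_{op}\le \frac1\gamma C(\eta+\varepsilon)+\frac{\varepsilon}{\gamma(\gamma-\varepsilon)}C^2.$$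
   Context: For an $n\times n$ matrix $W=(w_{i,j})$ and an $nd\times nd$ block matrix $G$ with $d\times d$ blocks $G_{i,j}$, define $S$ as the block matrix with blocks $S_{i,j}=w_{i,j}G_{i,j}$ and $D$ as the block-diagonal matrix with diagonal blocks $D_{i,i}=\big(\sum_{j\ne i}w_{i,j}\big)\mathrm I_d$ (assumed invertible); $L(W,G):=D^{-1}S$. $\|\cdot\|_{op}$ is the largest singular value, $\|\cdot\|_F$ the Frobenius norm. *)

(* Defs.v *)
From HB Require Import structures.
From mathcomp Require Import all_boot all_order all_algebra.
From mathcomp Require Import all_classical all_reals.
Set Implicit Arguments. Unset Strict Implicit. Unset Printing Implicit Defensive.
Import Order.TTheory GRing.Theory Num.Theory.
Local Open Scope ring_scope.

Definition norm2 {R : realType} {m : nat} (v : 'cV[R]_m) : R :=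
  Num.sqrt (\sum_(i < m) v i 0 ^+ 2).

Definition frob {R : realType} {p q : nat} (A : 'M[R]_(p, q)) : R :=
  Num.sqrt (\sum_(i < p) \sum_(j < q) A i j ^+ 2).

Definition opnorm {R : realType} {m : nat} (A : 'M[R]_m) : R :=
  sup [set norm2 (A *m v) | v in [set v : 'cV[R]_m | norm2 v <= 1]]%classic.

(* block matrix built from n x n blocks of size d x d:
   its size is \sum_(i < n) d = n * d *)
Definition blk {R : realType} (n d : nat) (B : 'I_n -> 'I_n -> 'M[R]_d)
  : 'M[R]_(\sum_(i < n) d) :=
  @mxblock R n n (fun _ => d) (fun _ => d) B.

Definition Smat {R : realType} (n d : nat) (W : 'M[R]_n)
  (G : 'I_n -> 'I_n -> 'M[R]_d) : 'M[R]_(\sum_(i < n) d) :=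
  blk (fun i j => W i j *: G i j).

Definition Dmat {R : realType} (n d : nat) (W : 'M[R]_n)
  : 'M[R]_(\sum_(i < n) d) :=
  blk (fun i j => if i == j then (\sum_(k < n | k != i) W i k)%:M else 0).

Definition Lmat {R : realType} (n d : nat) (W : 'M[R]_n)
  (G : 'I_n -> 'I_n -> 'M[R]_d) : 'M[R]_(\sum_(i < n) d) :=
  invmx (Dmat d W) *m Smat W G.

(* Main.v *)
Require Import Defs.
From HB Require Import structures.
From mathcomp Require Import all_boot all_order all_algebra.
From mathcomp Require Import all_classical all_reals.
From mathcomp Require Import ring lra.
Import Order.TTheory GRing.Theory Num.Theory.
Local Open Scope ring_scope.

Section Scalar.
Variable R : realType.

Lemma CS (I : finType) (P : pred I) (a b : I -> R) :
  (\sum_(i | P i) a i * b i) ^+ 2 <=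
  (\sum_(i | P i) a i ^+ 2) * (\sum_(i | P i) b i ^+ 2).
Proof.
have E : \sum_(i | P i) \sum_(j | P j) (a i * b j - a j * b i) ^+ 2 =
  2 * ((\sum_(i | P i) a i ^+ 2) * (\sum_(i | P i) b i ^+ 2)
       - (\sum_(i | P i) a i * b i) ^+ 2).
  have e1 : forall i j, (a i * b j - a j * b i) ^+ 2 =
       a i ^+ 2 * b j ^+ 2 + b i ^+ 2 * a j ^+ 2 - 2 * (a i * b i) * (a j * b j).
    by move=> i j; ring.
  under eq_bigr => i _ do under eq_bigr => j _ do rewrite e1.
  under eq_bigr => i _ do rewrite sumrB big_split /= -!mulr_sumr.
  rewrite sumrB big_split /= -!mulr_suml.
  rewrite -mulr_sumr; ring.
have : 0 <= \sum_(i | P i) \sum_(j | P j) (a i * b j - a j * b i) ^+ 2.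
  by apply: sumr_ge0 => i _; apply: sumr_ge0 => j _; apply: sqr_ge0.
rewrite E; lra.
Qed.

Lemma mink (I : finType) (P : pred I) (a b : I -> R) (sa sb : R) :
  0 <= sa -> 0 <= sb ->
  \sum_(i | P i) a i ^+ 2 <= sa ^+ 2 -> \sum_(i | P i) b i ^+ 2 <= sb ^+ 2 ->
  \sum_(i | P i) (a i + b i) ^+ 2 <= (sa + sb) ^+ 2.
Proof.
move=> ha hb h1 h2.
have h3 := CS _ P a b.
have hA : 0 <= \sum_(i | P i) a i ^+ 2 by apply: sumr_ge0 => i _; apply: sqr_ge0.
have hB : 0 <= \sum_(i | P i) b i ^+ 2 by apply: sumr_ge0 => i _; apply: sqr_ge0.
have h4 : (\sum_(i | P i) a i * b i) ^+ 2 <= (sa * sb) ^+ 2.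
  apply: (le_trans h3); rewrite exprMn; apply: ler_pM => //.
have h5 : \sum_(i | P i) a i * b i <= sa * sb.
  have hs : 0 <= sa * sb by apply: mulr_ge0.
  nra.
have -> : \sum_(i | P i) (a i + b i) ^+ 2 =
   \sum_(i | P i) a i ^+ 2 + 2 * \sum_(i | P i) a i * b i + \sum_(i | P i) b i ^+ 2.
  rewrite mulr_sumr -!big_split /=; apply: eq_bigr => i _; ring.
nra.
Qed.


Lemma cen (I : finType) (P : pred I) (a b : I -> R) (ca cb m : R) :
  \sum_(i | P i) 1 = m ->
  \sum_(i | P i) (a i - ca) * (b i - cb) =
  \sum_(i | P i) a i * b i - ca * \sum_(i | P i) b i - cb * \sum_(i | P i) a i + m * ca * cb.
Proof.
move=> hm.
have e : forall i, (a i - ca) * (b i - cb) = a i * b i - ca * b i - cb * a i + ca * cb * 1.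
  by move=> i; ring.
under eq_bigr do rewrite e.
rewrite big_split sumrB sumrB /= -!mulr_sumr hm; ring.
Qed.

Lemma Lag2 (I : finType) (P : pred I) (w dl : I -> R) (m : R) :
  \sum_(i | P i) 1 = m -> 0 < m ->
  \sum_(j | P j) (dl j * (\sum_(k | P k) w k) - w j * (\sum_(k | P k) dl k)) ^+ 2
  <= m * (\sum_(j | P j) w j ^+ 2) * (\sum_(j | P j) dl j ^+ 2).
Proof.
move=> hm m0.
set D := \sum_(k | P k) w k; set Dl := \sum_(k | P k) dl k.
set W2 := \sum_(j | P j) w j ^+ 2; set E := \sum_(j | P j) dl j ^+ 2.
set X := \sum_(j | P j) dl j * w j.
have ex : \sum_(j | P j) (dl j * D - w j * Dl) ^+ 2 = D ^+ 2 * E - 2 * D * Dl * X + Dl ^+ 2 * W2.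
  have e : forall j, (dl j * D - w j * Dl) ^+ 2 =
     D ^+ 2 * dl j ^+ 2 - 2 * D * Dl * (dl j * w j) + Dl ^+ 2 * w j ^+ 2 by move=> j; ring.
  under eq_bigr do rewrite e.
  by rewrite big_split sumrB /= -!mulr_sumr.
rewrite ex.
set p := Dl / m; set q := D / m.
have hDl : Dl = m * p by rewrite /p; field; lra.
have hD : D = m * q by rewrite /q; field; lra.
have h := CS _ P (fun j => dl j - p) (fun j => w j - q).
rewrite /= (cen _ _ _ _ _ _ _ hm) in h.
have e2 : forall c (a : I -> R), \sum_(j | P j) (a j - c) ^+ 2 = \sum_(j | P j) (a j - c) * (a j - c).
  by move=> c a; apply: eq_bigr => j _; rewrite expr2.
rewrite !e2 !(cen _ _ _ _ _ _ _ hm) in h.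
have e3 : forall (a : I -> R), \sum_(j | P j) a j * a j = \sum_(j | P j) a j ^+ 2.
  by move=> a; apply: eq_bigr => j _; rewrite expr2.
rewrite !e3 -/W2 -/E -/D -/Dl -/X in h.
rewrite hD hDl in h *.
have hX : 0 <= X ^+ 2 by apply: sqr_ge0.
have : m * (m * q ^+ 2 * E - 2 * m * p * q * X + m * p ^+ 2 * W2) <= m * (W2 * E).
  rewrite ler_pM2l //. nra.
have e4 : (m * q) ^+ 2 * E - 2 * (m * q) * (m * p) * X + (m * p) ^+ 2 * W2 =
   m * (m * q ^+ 2 * E - 2 * m * p * q * X + m * p ^+ 2 * W2) by ring.
rewrite e4; lra.
Qed.


Lemma core (n m C D t : R) : 0 < m -> n = m + 1 -> 0 < t -> t <= C -> D <= m * C -> t * m <= D -> 0 <= D ->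
  n * t ^+ 2 * (m ^+ 2 * C * D + (D + C * m) ^+ 2) <= (t + C) ^+ 2 * (D + n * m * t) ^+ 2.
Proof.
move=> m0 hn t0 tC DC tD D0.
have C0 : 0 < C by lra.
have n0 : 0 < n by lra.
have hCn : D <= C * n by nra.
have p1 : n * t ^+ 2 * m ^+ 2 * C * D <= C ^+ 2 * n ^+ 2 * m ^+ 2 * t ^+ 2.
  have -> : C ^+ 2 * n ^+ 2 * m ^+ 2 * t ^+ 2 = (n * t ^+ 2 * m ^+ 2 * C) * (C * n) by ring.
  apply: ler_wpM2l => //; apply: mulr_ge0; [|lra]; apply: mulr_ge0; [|apply: sqr_ge0].
  by apply: mulr_ge0; [lra| apply: sqr_ge0].
have p2 : n * t ^+ 2 * D ^+ 2 <= C ^+ 2 * D * n * m * t.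
  have h : t * D <= C * (m * C) by apply: ler_pM; lra.
  have -> : C ^+ 2 * D * n * m * t = (n * t * D) * (C * (m * C)) by ring.
  have -> : n * t ^+ 2 * D ^+ 2 = (n * t * D) * (t * D) by ring.
  apply: ler_wpM2l => //; apply: mulr_ge0 => //; apply: mulr_ge0; lra.
have p3 : n * t ^+ 2 * C ^+ 2 * m ^+ 2 <= C ^+ 2 * D * n * m * t.
  have -> : C ^+ 2 * D * n * m * t = (n * t * C ^+ 2 * m) * D by ring.
  have -> : n * t ^+ 2 * C ^+ 2 * m ^+ 2 = (n * t * C ^+ 2 * m) * (t * m) by ring.
  apply: ler_wpM2l => //; apply: mulr_ge0; [|lra]; apply: mulr_ge0; [|apply: sqr_ge0]; apply: mulr_ge0; lra.
have q0 : 0 <= D * n * m * t ^+ 2 * C.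
  apply: mulr_ge0; [|lra]; apply: mulr_ge0; [|apply: sqr_ge0]; apply: mulr_ge0; [|lra]; apply: mulr_ge0; lra.
have q1 : 0 <= t ^+ 2 * (D + n * m * t) ^+ 2 by apply: mulr_ge0; apply: sqr_ge0.
have q2 : 0 <= 2 * C * t * D ^+ 2.
  apply: mulr_ge0; [|apply: sqr_ge0]; apply: mulr_ge0; [|lra]; apply: mulr_ge0; lra.
have q3 : 0 <= 2 * C * t * n ^+ 2 * m ^+ 2 * t ^+ 2.
  apply: mulr_ge0; [|apply: sqr_ge0]; apply: mulr_ge0; [|apply: sqr_ge0]; apply: mulr_ge0; [|apply: sqr_ge0]; apply: mulr_ge0; lra.
have q4 : 0 <= C ^+ 2 * D ^+ 2 by apply: mulr_ge0; apply: sqr_ge0.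
have eL : n * t ^+ 2 * (m ^+ 2 * C * D + (D + C * m) ^+ 2) =
  n * t ^+ 2 * m ^+ 2 * C * D + n * t ^+ 2 * D ^+ 2 + 2 * (D * n * m * t ^+ 2 * C) + n * t ^+ 2 * C ^+ 2 * m ^+ 2 by ring.
have eR : (t + C) ^+ 2 * (D + n * m * t) ^+ 2 =
  C ^+ 2 * n ^+ 2 * m ^+ 2 * t ^+ 2 + 2 * (C ^+ 2 * D * n * m * t) + 4 * (D * n * m * t ^+ 2 * C)
  + t ^+ 2 * (D + n * m * t) ^+ 2 + 2 * C * t * D ^+ 2 + 2 * C * t * n ^+ 2 * m ^+ 2 * t ^+ 2 + C ^+ 2 * D ^+ 2 by ring.
rewrite eL eR; lra.
Qed.

Lemma key (m C D E g e : R) : 0 < m -> 0 <= e -> e < g -> (m + 1) * g < D -> D <= m * C ->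
  D - m * e <= E ->
  (m ^+ 2 * C * D + (D + C * m) ^+ 2) * ((m + 1) * g ^+ 2 * (g - e) ^+ 2)
  <= (g - e + C) ^+ 2 * (D ^+ 2 * E ^+ 2).
Proof.
move=> m0 e0 eg hD DC hE.
set t := g - e. set n := m + 1. move: hD; rewrite -/n => hD.
have t0 : 0 < t by rewrite /t; lra.
have g0 : 0 < g by lra.
have hK : D + n * m * t <= n * E.
  have : m * (D - n * g) >= 0 by apply: mulr_ge0; lra.
  rewrite /n /t; nra.
have D0 : 0 < D.
  have : 0 < n * g by apply: mulr_gt0 => //; rewrite /n; lra.
  lra.
have K0 : 0 <= D + n * m * t.
  apply: addr_ge0; [lra| apply: mulr_ge0; [apply: mulr_ge0|]; rewrite /n; lra].
have hgC : g <= C.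
  rewrite -(ler_pM2l m0).
  have : (m + 1) * g = m * g + g by ring.
  rewrite /n in hD; lra.
have htC : t <= C by rewrite /t; lra.
have htD : t * m <= D.
  have : t * m <= g * m by rewrite ler_pM2r //; rewrite /t; lra.
  have : g * m < n * g by rewrite /n; nra.
  lra.
have hc := @core n m C D t m0 (erefl _) t0 htC DC htD (ltW D0).
have X0 : 0 <= m ^+ 2 * C * D + (D + C * m) ^+ 2.
  apply: addr_ge0; [|apply: sqr_ge0]; apply: mulr_ge0; [|lra]; apply: mulr_ge0; [apply: sqr_ge0|lra].
set X := m ^+ 2 * C * D + (D + C * m) ^+ 2 in X0 hc *.
have s1 : (n * g) ^+ 2 <= D ^+ 2 by rewrite ler_sqr ?nnegrE; [lra|rewrite /n; apply: mulr_ge0; lra|lra].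
have s2 : (D + n * m * t) ^+ 2 <= (n * E) ^+ 2 by rewrite ler_sqr ?nnegrE; lra.
have hc' : n * t ^+ 2 * X <= (t + C) ^+ 2 * (n * E) ^+ 2.
  apply: (le_trans hc).
  by apply: ler_wpM2l => //; apply: sqr_ge0.
have n0 : 0 < n by rewrite /n; lra.
rewrite -(ler_pM2l n0).
have -> : n * (X * (n * g ^+ 2 * t ^+ 2)) = (X * t ^+ 2) * (n * g) ^+ 2 by ring.
apply: (le_trans (y := (X * t ^+ 2) * D ^+ 2)).
  by apply: ler_wpM2l => //; apply: mulr_ge0 => //; apply: sqr_ge0.
have -> : n * ((t + C) ^+ 2 * (D ^+ 2 * E ^+ 2)) = D ^+ 2 * ((t + C) ^+ 2 * (n * E) ^+ 2) / n.
  by field; lra.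
rewrite ler_pdivlMr //.
have -> : X * t ^+ 2 * D ^+ 2 * n = D ^+ 2 * (n * t ^+ 2 * X) by ring.
by apply: ler_wpM2l => //; apply: sqr_ge0.
Qed.

End Scalar.


Section Blk.
Variable R : realType.
Variables n d : nat.
Local Notation N := (\sum_(i < n) d)%N.
Local Notation Rk := (@tagnat.Rank n (fun _ => d)).
Local Notation s1 := (@tagnat.sig1 n (fun _ => d)).
Definition s2 (k : 'I_N) : 'I_d := @tagnat.sig2 n (fun _ => d) k.

Lemma sum_blk (F : 'I_N -> R) : \sum_k F k = \sum_(i < n) \sum_(a < d) F (Rk i a).
Proof.
rewrite (@sig_big_dep _ _ _ 'I_n (fun _ => 'I_d) xpredT (fun _ => xpredT) (fun i a => F (Rk i a))) /=.
rewrite (reindex (@tagnat.rank n (fun _ => d))) /=; last first.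
  by exists (@tagnat.sig n (fun _ => d)) => x _; [apply: tagnat.rankK | apply: tagnat.sigK].
by apply: eq_bigr => -[i a] _; rewrite tagnat.rankE.
Qed.

Lemma s1R i a : s1 (Rk i a) = i.
Proof. exact: tagnat.Rank1K. Qed.

Lemma s2R i a : s2 (Rk i a) = a.
Proof. by apply: val_inj; rewrite /s2 tagnat.Rank2K. Qed.

Lemma blk_eq (k l : 'I_N) : s1 k = s1 l -> s2 k = s2 l -> k = l.
Proof.
move=> h1 h2; rewrite -(tagnat.sig2K k) -(tagnat.sig2K l).
move: h2; rewrite /s2.
move: (tagnat.sig2 k) (tagnat.sig2 l); rewrite h1 => a b ->.
done.
Qed.

Lemma blk_entry (B : 'I_n -> 'I_n -> 'M[R]_d) k l : blk B k l = B (s1 k) (s1 l) (s2 k) (s2 l).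
Proof. by rewrite /blk /mxblock mxE. Qed.


Lemma s2_eq (k l : 'I_N) : s1 k = s1 l -> (s2 k == s2 l) = (k == l).
Proof.
move=> h; apply/eqP/eqP => [h2|->//]; exact: blk_eq.
Qed.

Definition Dsum (W : 'M[R]_n) (i : 'I_n) := \sum_(j < n | j != i) W i j.

Lemma Dmat_diag (W : 'M[R]_n) : Dmat d W = diag_mx (\row_k Dsum W (s1 k)).
Proof.
apply/matrixP => k l; rewrite /Dmat blk_entry !mxE.
case: (eqVneq (s1 k) (s1 l)) => h.
  by rewrite mxE s2_eq.
rewrite mxE; case: (eqVneq k l) => [kl|]; last by rewrite mulr0n.
by move: h; rewrite kl eqxx.
Qed.

Lemma Lmat_entry (W : 'M[R]_n) (G : 'I_n -> 'I_n -> 'M[R]_d)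
  (hD : forall i, Dsum W i != 0) k l :
  Lmat W G k l = (Dsum W (s1 k))^-1 * (W (s1 k) (s1 l) * G (s1 k) (s1 l) (s2 k) (s2 l)).
Proof.
rewrite /Lmat Dmat_diag.
set dv := \row_k Dsum W (s1 k).
have U : diag_mx dv \in unitmx.
  rewrite unitmxE det_diag unitfE; apply/prodf_neq0 => i _; rewrite mxE; exact: hD.
set Y := \matrix_(k, l) ((dv 0 k)^-1 * Smat W G k l).
have -> : Smat W G = diag_mx dv *m Y.
  apply/matrixP => a b; rewrite mul_diag_mx !mxE mulrA mulfV ?mul1r //; exact: hD.
by rewrite mulKmx // !mxE.
Qed.

End Blk.

Lemma opnorm_frob (R : realType) m (A : 'M[R]_m) : opnorm A <= frob A.
Proof.
rewrite /opnorm; apply: ge_sup.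
  exists (norm2 (A *m 0)), 0 => //=.
  rewrite /norm2 (_ : \sum_(i < m) _ = 0) ?sqrtr0 //.
  by apply: big1 => i _; rewrite mxE expr0n.
move=> _ [v hv <-].
have hv' : \sum_(i < m) v i 0 ^+ 2 <= 1.
  by move: hv; rewrite /= /norm2 -[X in _ <= X]sqrtr1 ler_sqrt.
rewrite /norm2 /frob ler_sqrt; last first.
  by apply: sumr_ge0 => i _; apply: sumr_ge0 => j _; apply: sqr_ge0.
apply: ler_sum => k _; rewrite mxE.
apply: (le_trans (CS _ _ _ _ _)).
rewrite -[X in _ <= X]mulr1; apply: ler_wpM2l => //.
by apply: sumr_ge0 => j _; apply: sqr_ge0.
Qed.


Section Rows.
Variable R : realType.
Variable n : nat.
Variable i : 'I_n.
Variables (w w' : 'I_n -> R) (C g e m : R).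
Hypothesis hw : forall j, 0 <= w j <= C.
Hypothesis hm : \sum_(j < n | j != i) (1 : R) = m.
Hypothesis hnm : n%:R = m + 1.
Hypothesis hg : 0 < g.
Local Notation D := (\sum_(k < n | k != i) w k).
Hypothesis hD : n%:R * g < D.

Lemma DmC : D <= m * C.
Proof.
rewrite -hm mulr_suml; apply: ler_sum => j _; rewrite mul1r; by case/andP: (hw j).
Qed.

Lemma sumW2 : \sum_j w j ^+ 2 <= C * (D + C).
Proof.
rewrite (bigD1 i) //=.
have h1 : w i ^+ 2 <= C * C by case/andP: (hw i) => a b; nra.
have h2 : \sum_(j < n | j != i) w j ^+ 2 <= C * D.
  rewrite mulr_sumr; apply: ler_sum => j _; case/andP: (hw j) => a b; nra.
lra.
Qed.

Lemma n0 : 0 < n%:R :> R.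
Proof. by rewrite ltr0n (leq_ltn_trans _ (ltn_ord i)). Qed.

Lemma D0 : 0 < D.
Proof. have h : 0 < n%:R * g by apply: mulr_gt0 => //; exact: n0. have := hD. lra. Qed.

Lemma rowA : \sum_j (w j / D) ^+ 2 <= C ^+ 2 / (n%:R * g ^+ 2).
Proof.
have hD0 := D0. have hn0 := n0. have hDm := DmC. have hDD := hD. have hgg := hg.
have -> : \sum_j (w j / D) ^+ 2 = (\sum_j w j ^+ 2) / D ^+ 2.
  rewrite mulr_suml; apply: eq_bigr => j _; by rewrite expr_div_n.
have hs := sumW2.
have C0 : 0 <= C by case/andP: (hw i) => a b; lra.
have hng : 0 < n%:R * g ^+ 2 by apply: mulr_gt0 => //; apply: exprn_gt0.
rewrite ler_pdivrMr ?exprn_gt0 // mulrAC ler_pdivlMr //.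
apply: (le_trans (y := C * (D + C) * (n%:R * g ^+ 2))).
  by apply: ler_wpM2r => //; apply: ltW.
have h1 : D + C <= n%:R * C by rewrite hnm mulrDl mul1r; lra.
have h2 : (n%:R * g) ^+ 2 <= D ^+ 2.
  rewrite ler_sqr ?nnegrE; [lra| apply: mulr_ge0; lra | lra].
apply: (le_trans (y := C * (n%:R * C) * (n%:R * g ^+ 2))).
  apply: ler_wpM2r; [lra|]; apply: ler_wpM2l => //.
have -> : C * (n%:R * C) * (n%:R * g ^+ 2) = C ^+ 2 * (n%:R * g) ^+ 2 by ring.
apply: ler_wpM2l => //; apply: sqr_ge0.
Qed.

Variables (e' : R).
Hypothesis hw' : forall j, `|w' j - w j| <= e.
Hypothesis he0 : 0 <= e.
Hypothesis heg : e < g.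
Local Notation E := (\sum_(k < n | k != i) w' k).

Lemma Epos : D - m * e <= E /\ 0 < E.
Proof.
have hD0 := D0. have hn0 := n0. have hDm := DmC. have hDD := hD. have hgg := hg.
have hw'' := hw'. have he := he0. have hge := heg. have hmm := hm.
have C0 : 0 <= C by case/andP: (hw i) => a b; lra.
have m0 : 0 < m by nra.
have hE : D - m * e <= E.
  have : - (m * e) <= E - D.
    rewrite -sumrB -hm mulr_suml -sumrN; apply: ler_sum => j _; rewrite mul1r.
    by move: (hw' j); rewrite ler_norml => /andP[].
  lra.
split => //.
have hnm' : (m + 1) * g < D by rewrite -hnm.
have : m * e <= m * g by rewrite ler_pM2l //; lra.
have : (m + 1) * g = m * g + g by ring.
lra.
Qed.

Lemma rowB : \sum_j (w' j / E - w j / D) ^+ 2 <=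
   e ^+ 2 * (g - e + C) ^+ 2 / (n%:R * g ^+ 2 * (g - e) ^+ 2).
Proof.
have hD0 := D0. have hn0 := n0. have hDm := DmC. have hDD := hD. have hgg := hg.
have hw'' := hw'. have he := he0. have hge := heg. have hmm := hm.
have C0 : 0 <= C by case/andP: (hw i) => a b; lra.
have m0 : 0 < m by nra.
pose dl j := w' j - w j.
pose Dl := \sum_(k < n | k != i) dl k.
have hEDl : E = D + Dl by rewrite /Dl /dl sumrB; ring.
have hdl : forall j, - e <= dl j <= e by move=> j; rewrite -ler_norml; exact: hw'.
have hE : D - m * e <= E.
  have : - (m * e) <= Dl.
    rewrite /Dl -hm mulr_suml -sumrN; apply: ler_sum => j _; rewrite mul1r.
    by case/andP: (hdl j).
  lra.
have hnm' : (m + 1) * g < D by rewrite -hnm.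
have E0 : 0 < E.
  have : m * e <= m * g by rewrite ler_pM2l //; lra.
  have : (m + 1) * g = m * g + g by ring.
  lra.
have hDl : `|Dl| <= m * e.
  apply: (le_trans (ler_norm_sum _ _ _)).
  rewrite -hm mulr_suml; apply: ler_sum => j _; rewrite mul1r ler_norml; exact: hdl.
pose N := \sum_j (dl j * D - w j * Dl) ^+ 2.
have eN : \sum_j (w' j / E - w j / D) ^+ 2 = N / (D * E) ^+ 2.
  rewrite /N mulr_suml; apply: eq_bigr => j _.
  rewrite -expr_div_n; congr (_ ^+ 2).
  rewrite hEDl /dl; field.
  by apply/andP; split; [rewrite -hEDl; lra| lra].
rewrite eN.
have off : \sum_(j < n | j != i) (dl j * D - w j * Dl) ^+ 2 <= e ^+ 2 * (m ^+ 2 * C * D).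
  have L := Lag2 _ _ (fun j => j != i) w dl m hm m0; rewrite /= -/Dl in L; apply: (le_trans L).
  have hW2 : \sum_(j < n | j != i) w j ^+ 2 <= C * D.
    rewrite mulr_sumr; apply: ler_sum => j _; case/andP: (hw j) => a b; nra.
  have hE2 : \sum_(j < n | j != i) dl j ^+ 2 <= m * e ^+ 2.
    rewrite -hm mulr_suml; apply: ler_sum => j _; rewrite mul1r.
    by case/andP: (hdl j) => a b; nra.
  have W20 : 0 <= \sum_(j < n | j != i) w j ^+ 2 by apply: sumr_ge0 => j _; apply: sqr_ge0.
  have E20 : 0 <= \sum_(j < n | j != i) dl j ^+ 2 by apply: sumr_ge0 => j _; apply: sqr_ge0.
  have q1 : m * (\sum_(j < n | j != i) w j ^+ 2) <= m * (C * D) by rewrite ler_pM2l.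
  have q2 : (m * (\sum_(j < n | j != i) w j ^+ 2)) * \sum_(j < n | j != i) dl j ^+ 2
     <= (m * (C * D)) * (m * e ^+ 2).
    by apply: ler_pM; [apply: mulr_ge0; lra | exact: E20 | exact: q1 | exact: hE2].
  have -> : e ^+ 2 * (m ^+ 2 * C * D) = (m * (C * D)) * (m * e ^+ 2) by ring.
  lra.
have diag : (dl i * D - w i * Dl) ^+ 2 <= e ^+ 2 * (D + C * m) ^+ 2.
  have h1 : `|dl i * D - w i * Dl| <= e * D + C * (m * e).
    apply: (le_trans (ler_normB _ _)); rewrite !normrM.
    have : `|D| = D by rewrite ger0_norm //; lra.
    move=> ->.
    case/andP: (hw i) => a b.
    rewrite (ger0_norm a).
    have : `|dl i| <= e by rewrite ler_norml.
    have : 0 <= `|Dl| by apply: normr_ge0.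
    nra.
  have -> : e ^+ 2 * (D + C * m) ^+ 2 = (e * D + C * (m * e)) ^+ 2 by ring.
  move: h1; rewrite ler_norml => /andP [a b]; nra.
have hN : N <= e ^+ 2 * (m ^+ 2 * C * D + (D + C * m) ^+ 2).
  rewrite /N (bigD1 i) //=; lra.
have hk := @key R m C D E g e m0 he0 heg hnm' hDm hE.
have K0 : 0 < n%:R * g ^+ 2 * (g - e) ^+ 2.
  apply: mulr_gt0; [apply: mulr_gt0 => //; apply: exprn_gt0 => //|apply: exprn_gt0; lra].
rewrite ler_pdivrMr; last by apply: exprn_gt0; apply: mulr_gt0.
rewrite mulrAC ler_pdivlMr //.
apply: (le_trans (y := e ^+ 2 * (m ^+ 2 * C * D + (D + C * m) ^+ 2) * (n%:R * g ^+ 2 * (g - e) ^+ 2))).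
  by apply: ler_wpM2r => //; apply: ltW.
rewrite hnm -mulrA.
have -> : e ^+ 2 * (g - e + C) ^+ 2 * (D * E) ^+ 2 = e ^+ 2 * ((g - e + C) ^+ 2 * (D ^+ 2 * E ^+ 2)) by ring.
apply: ler_wpM2l; [apply: sqr_ge0|exact: hk].
Qed.

End Rows.


Lemma frob_sq (R : realType) p q (Z : 'M[R]_(p, q)) c : frob Z <= c ->
  \sum_(a < p) \sum_(b < q) Z a b ^+ 2 <= c ^+ 2.
Proof.
rewrite /frob => h.
have S0 : 0 <= \sum_(a < p) \sum_(b < q) Z a b ^+ 2.
  by apply: sumr_ge0 => a _; apply: sumr_ge0 => b _; apply: sqr_ge0.
have := sqr_sqrtr S0; have := sqrtr_ge0 (\sum_(a < p) \sum_(b < q) Z a b ^+ 2).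
move: h; set s := Num.sqrt _ => h h1 h2; nra.
Qed.

Lemma blockb (R : realType) d (A B : 'M[R]_d) (x y eta C : R) :
  0 <= x -> 0 <= eta -> 0 <= C -> frob (B - A) <= eta -> frob B <= C ->
  \sum_(a < d) \sum_(b < d) (x * A a b - y * B a b) ^+ 2 <= (x * eta + `|y - x| * C) ^+ 2.
Proof.
move=> x0 e0 C0 hBA hB.
have h1 := frob_sq _ _ _ _ _ hBA. have h2 := frob_sq _ _ _ _ _ hB.
rewrite pair_big /=.
have -> : \sum_(p : 'I_d * 'I_d) (x * A p.1 p.2 - y * B p.1 p.2) ^+ 2 =
  \sum_(p : 'I_d * 'I_d) (x * (A p.1 p.2 - B p.1 p.2) + (x - y) * B p.1 p.2) ^+ 2.
  by apply: eq_bigr => p _; congr (_ ^+ 2); ring.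
apply: (mink _ _ _ (fun p => x * (A p.1 p.2 - B p.1 p.2)) (fun p => (x - y) * B p.1 p.2)).
- by apply: mulr_ge0.
- by apply: mulr_ge0.
- have -> : \sum_(p : 'I_d * 'I_d) (x * (A p.1 p.2 - B p.1 p.2)) ^+ 2 =
     x ^+ 2 * \sum_(a < d) \sum_(b < d) (B - A) a b ^+ 2.
    rewrite pair_big /= mulr_sumr; apply: eq_bigr => p _; rewrite !mxE; ring.
  by rewrite exprMn; apply: ler_wpM2l => //; apply: sqr_ge0.
- have -> : \sum_(p : 'I_d * 'I_d) ((x - y) * B p.1 p.2) ^+ 2 =
     `|y - x| ^+ 2 * \sum_(a < d) \sum_(b < d) B a b ^+ 2.
    rewrite pair_big /= mulr_sumr; apply: eq_bigr => p _.
    by rewrite real_normK ?num_real //; ring.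
  by rewrite exprMn; apply: ler_wpM2l => //; apply: sqr_ge0.
Qed.


Theorem lemma2p2 (R : realType) (n d : nat) (hn : (1 <= n)%N) (hd : (1 <= d)%N)
  (W Wt : 'M[R]_n) (G Gt : 'I_n -> 'I_n -> 'M[R]_d)
  (f : 'I_n -> R) (eps eta C gamma : R)
  (hf : forall i, 0 < f i) (heps : 0 <= eps) (heta : 0 <= eta)
  (hWt : forall i j, `|Wt i j / f i - W i j| <= eps)
  (hGt : forall i j, frob (Gt i j - G i j) <= eta)
  (hC : 0 < C)
  (hW : forall i j, 0 <= W i j <= C)
  (hG : forall i j, frob (G i j) <= C)
  (hGt' : forall i j, frob (Gt i j) <= C)
  (hgam : forall i, gamma < n%:R^-1 * \sum_(j < n | j != i) W i j)
  (hge : eps < gamma) :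
  opnorm (Lmat W G - Lmat Wt Gt)
    <= gamma^-1 * C * (eta + eps) + eps / (gamma * (gamma - eps)) * C ^+ 2.
Proof.
have g0 : 0 < gamma by lra.
have n0 : 0 < n%:R :> R by rewrite ltr0n.
pose m : R := n%:R - 1.
have hnm : n%:R = m + 1 by rewrite /m; ring.
have hm : forall i : 'I_n, \sum_(j < n | j != i) (1 : R) = m.
  move=> i; have : \sum_(j < n) (1 : R) = n%:R by rewrite sumr_const card_ord.
  rewrite (bigD1 i) //= => h; rewrite /m; lra.
have hD : forall i, n%:R * gamma < Dsum _ _ W i.
  move=> i; have h := hgam i; rewrite -(ltr_pM2l n0) mulrA mulfV ?mul1r in h => //.
  exact: lt0r_neq0.
pose wp i j := Wt i j / f i.
pose Ep i := \sum_(k < n | k != i) wp i k.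
have hEp : forall i, Dsum _ _ W i - m * eps <= Ep i /\ 0 < Ep i.
  move=> i; exact: (@Epos R n i (fun j => W i j) (wp i) C gamma eps m (hW i) (hm i) hnm g0 (hD i) (hWt i) heps hge).
have hDt : forall i, Dsum _ _ Wt i = f i * Ep i.
  move=> i; rewrite /Dsum /Ep mulr_sumr; apply: eq_bigr => k _; rewrite /wp; field.
  exact: lt0r_neq0 (hf i).
have hDW : forall i, Dsum _ _ W i != 0.
  move=> i; apply: lt0r_neq0; have := hD i; have : 0 < n%:R * gamma by apply: mulr_gt0. lra.
have hDWt : forall i, Dsum _ _ Wt i != 0.
  move=> i; rewrite hDt mulf_neq0 //; apply: lt0r_neq0; [exact: hf| by case: (hEp i)].
pose x i j := W i j / Dsum _ _ W i.
pose y i j := wp i j / Ep i.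
have ent : forall i (a : 'I_d) j (b : 'I_d),
  (Lmat W G - Lmat Wt Gt) (@tagnat.Rank n (fun _ => d) i a) (@tagnat.Rank n (fun _ => d) j b)
   = x i j * G i j a b - y i j * Gt i j a b.
  move=> i a j b.
  rewrite [LHS]mxE [X in _ + X]mxE !(Lmat_entry _ _ _ _ _ hDW) !(Lmat_entry _ _ _ _ _ hDWt).
  rewrite !s1R !s2R hDt /x /y /wp /Ep.
  field.
  apply/and3P; split; [|exact: lt0r_neq0 (hf i)|exact: hDW].
  by apply: lt0r_neq0; case: (hEp i).
set M := Lmat W G - Lmat Wt Gt.
pose sa := C * eta / gamma.
pose sb := C * eps * (gamma - eps + C) / (gamma * (gamma - eps)).
have sa0 : 0 <= sa by rewrite /sa; apply: divr_ge0; [apply: mulr_ge0; lra|lra].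
have sb0 : 0 <= sb.
  rewrite /sb; apply: divr_ge0; [apply: mulr_ge0; [apply: mulr_ge0|]; lra|apply: mulr_ge0; lra].
have x0 : forall i j, 0 <= x i j.
  move=> i j; rewrite /x; apply: divr_ge0; first by case/andP: (hW i j).
  have := hD i; have : 0 < n%:R * gamma by apply: mulr_gt0. lra.
have hsum : \sum_k \sum_l M k l ^+ 2 <= (sa + sb) ^+ 2.
  rewrite (sum_blk _ _ _ (fun k => \sum_l M k l ^+ 2)).
  under eq_bigr => i _ do under eq_bigr => a _ do
    rewrite (sum_blk _ _ _ (fun l => M (@tagnat.Rank n (fun _ => d) i a) l ^+ 2)).
  under eq_bigr => i _ do under eq_bigr => a _ do under eq_bigr => j _ do
    under eq_bigr => b _ do rewrite ent.
  under eq_bigr => i _ do rewrite exchange_big.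
  apply: (le_trans (y := \sum_i \sum_j (x i j * eta + `|y i j - x i j| * C) ^+ 2)).
    apply: ler_sum => i _; apply: ler_sum => j _; apply: blockb => //; lra.
  rewrite pair_big /=.
  apply: (mink _ _ _ (fun p => x p.1 p.2 * eta) (fun p => `|y p.1 p.2 - x p.1 p.2| * C)) => //.
  - have A1 : \sum_i \sum_j (x i j * eta) ^+ 2 <= sa ^+ 2.
      apply: (le_trans (y := \sum_(i < n) eta ^+ 2 * (C ^+ 2 / (n%:R * gamma ^+ 2)))).
        apply: ler_sum => i _.
        have -> : \sum_j (x i j * eta) ^+ 2 = eta ^+ 2 * \sum_j (W i j / Dsum _ _ W i) ^+ 2.
          by rewrite mulr_sumr; apply: eq_bigr => j _; rewrite /x; ring.
        apply: ler_wpM2l; [apply: sqr_ge0|].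
        exact: (@rowA R n i (fun j => W i j) C gamma m (hW i) (hm i) hnm g0 (hD i)).
      rewrite sumr_const card_ord -[X in X <= _]mulr_natr /sa.
      have -> : eta ^+ 2 * (C ^+ 2 / (n%:R * gamma ^+ 2)) * n%:R = (C * eta / gamma) ^+ 2.
        by field; apply/andP; split; apply: lt0r_neq0.
      by [].
    by move: A1; rewrite pair_big.
  - have B1 : \sum_i \sum_j (`|y i j - x i j| * C) ^+ 2 <= sb ^+ 2.
      apply: (le_trans (y := \sum_(i < n) C ^+ 2 *
            (eps ^+ 2 * (gamma - eps + C) ^+ 2 / (n%:R * gamma ^+ 2 * (gamma - eps) ^+ 2)))).
        apply: ler_sum => i _.
        have -> : \sum_j (`|y i j - x i j| * C) ^+ 2 =
           C ^+ 2 * \sum_j (wp i j / Ep i - W i j / Dsum _ _ W i) ^+ 2.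
          rewrite mulr_sumr; apply: eq_bigr => j _; rewrite exprMn real_normK ?num_real //.
          by rewrite /y /x mulrC.
        apply: ler_wpM2l; [apply: sqr_ge0|].
        exact: (@rowB R n i (fun j => W i j) (wp i) C gamma eps m (hW i) (hm i) hnm g0 (hD i)
                  (hWt i) heps hge).
      rewrite sumr_const card_ord -[X in X <= _]mulr_natr /sb.
      have -> : C ^+ 2 * (eps ^+ 2 * (gamma - eps + C) ^+ 2 /
           (n%:R * gamma ^+ 2 * (gamma - eps) ^+ 2)) * n%:R =
           (C * eps * (gamma - eps + C) / (gamma * (gamma - eps))) ^+ 2.
        by field; apply/and3P; split; apply: lt0r_neq0; lra.
      by [].
    by move: B1; rewrite pair_big.
apply: (le_trans (opnorm_frob _ _ _)).
rewrite /frob.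
apply: (le_trans (y := Num.sqrt ((sa + sb) ^+ 2))).
  by rewrite ler_sqrt //; apply: sqr_ge0.
rewrite sqrtr_sqr ger0_norm; last by apply: addr_ge0.
rewrite /sa /sb le_eqVlt; apply/orP; left; apply/eqP.
by field; apply/andP; split; apply: lt0r_neq0; lra.
Qed.
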